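(* Let $F$ be a Fano manifold of Fano index $r$. Suppose that $F$ admits a weak Landau--Ginzburg model $f(x)\in\mathbb{C}[x_1^{\pm1},\dots,x_m^{\pm1}]$ all of whose coefficients are non-negative real numbers, and suppose that $\mathrm{Const}(f^{rn})\neq 0$ for all but finitely many $n\in\mathbb{Z}_{\ge0}$. Then the coefficients $G_n$ of the quantum period of $F$ are non-negative real numbers and the limit \[ \lim_{n\to\infty}\sqrt[rn]{(rn)!\,|G_{rn}|}=\lim_{n\to\infty}\sqrt[rn]{\mathrm{Const}(f^{rn})} \] exists.
   Context: For a Fano manifold $F$, the Fano index $r$ is the largest integer $r>0$ such that $c_1(F)/r$ is an integral class. The $J$-function of $F$ is the cohomology-valued (multivalued) function $J_F(t)=e^{c_1(F)\log t}\bigl(1+\sum_{i}\sum_{0\ne d\in H_2(F,\mathbb{Z})}\langle \phi_i/(1-\psi)\rangle_{0,1,d}\,\phi^i\,t^{c_1(F)\cdot d}\bigr)$, where $\{\phi_i\}$ is a basis of $H^{\mathrm{even}}(F)$, $\{\phi^i\}$ the Poincaré dual basis, and $\langle\cdot\rangle_{0,1,d}$ are genus-zero one-point descendant Gromov--Witten invariants ($\psi$ the cotangent line class). The quantum period of $F$ is $G_F(t)=\langle[\mathrm{pt}],J_F(t)\rangle=\sum_{n\ge0}G_nt^n$. For a Laurent polynomial $g$, $\mathrm{Const}(g)$ denotes its constant term. A Laurent polynomial $f$ is a weak Landau--Ginzburg model of $F$ if $G_F(t)=\sum_{n\ge0}\frac{1}{n!}\mathrm{Const}(f^n)t^n$.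 *)

(* Defs.v *)
From Stdlib Require Import Reals Lra Lia ZArith List.
Import ListNotations.
Open Scope R_scope.

(* A Laurent polynomial in m variables x_1..x_m with real coefficients is
   represented as a finite list of monomials (c, e), meaning the sum of
   c * x^e, where e : list Z is the exponent vector (of length m).
   Repeated exponents are allowed; their coefficients simply add up. *)
Definition monomial := (R * list Z)%type.
Definition laurent := list monomial.

Definition well_formed (m : nat) (f : laurent) : Prop :=
  forall c e, In (c, e) f -> length e = m.

Definition nonneg_coeffs (f : laurent) : Prop :=
  forall c e, In (c, e) f -> 0 <= c.

Definition vsub (v e : list Z) : list Z := map (fun p => (fst p - snd p)%Z) (combine v e).

(* coeff_pow f n v = coefficient of x^v in f^n. *)
Fixpoint coeff_pow (f : laurent) (n : nat) (v : list Z) : R :=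
  match n with
  | O => if list_eq_dec Z.eq_dec v (repeat 0%Z (length v)) then 1 else 0
  | S k => fold_right Rplus 0
             (map (fun ce => fst ce * coeff_pow f k (vsub v (snd ce))) f)
  end.

Definition Const_pow (m : nat) (f : laurent) (n : nat) : R :=
  coeff_pow f n (repeat 0%Z m).

Definition nroot (k : nat) (x : R) : R :=
  if Rle_dec x 0 then 0 else Rpower x (/ INR k).

(* Main.v *)
Require Import Defs.
From Stdlib Require Import Reals List Arith Factorial Lra Lia.
Open Scope R_scope.

Lemma sum_le {A} (l : list A) (g h : A -> R) :
  (forall x, In x l -> g x <= h x) ->
  fold_right Rplus 0 (map g l) <= fold_right Rplus 0 (map h l).
Proof.
  induction l as [|a l IH]; simpl; intros H; [lra|].
  apply Rplus_le_compat; [apply H; auto | apply IH; auto].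
Qed.

Lemma sum_scal {A} (l : list A) (g : A -> R) k :
  fold_right Rplus 0 (map (fun x => k * g x) l) = k * fold_right Rplus 0 (map g l).
Proof. induction l; simpl; [ring| rewrite IHl; ring]. Qed.

Lemma vsub_comm v e u : vsub (vsub v e) u = vsub (vsub v u) e.
Proof.
  revert e u; induction v as [|a v IH]; intros [|b e] [|c u]; simpl; auto.
  unfold vsub in *; simpl; f_equal; [simpl; lia | apply IH].
Qed.

Lemma vsub_length v e : length (vsub v e) = Nat.min (length v) (length e).
Proof. unfold vsub; rewrite length_map, length_combine; auto. Qed.

Lemma vsub_zero_eq v u : length v = length u ->
  vsub v u = repeat 0%Z (length (vsub v u)) -> v = u.
Proof.
  revert u; induction v as [|a v IH]; intros [|b u]; simpl; intros Hl H; try discriminate; auto.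
  unfold vsub in H; simpl in H. injection H as H1 H2.
  f_equal; [lia| apply IH; auto].
Qed.

Lemma vsub_rep m : vsub (repeat 0%Z m) (repeat 0%Z m) = repeat 0%Z m.
Proof. induction m; simpl; auto. unfold vsub in *; simpl; rewrite IHm; auto. Qed.

Section S.
Variables (m : nat) (f : laurent).
Hypothesis Hwf : well_formed m f.
Hypothesis Hnn : nonneg_coeffs f.

Lemma coeff_nonneg n v : 0 <= coeff_pow f n v.
Proof.
  revert v; induction n; intros v; simpl.
  - destruct list_eq_dec; lra.
  - apply Rle_trans with (fold_right Rplus 0 (map (fun _ : monomial => 0) f)).
    + clear; induction f; simpl; lra.
    + apply sum_le. intros [c e] Hin; simpl. apply Rmult_le_pos; [eapply Hnn; eauto| auto].
Qed.

Lemma coeff_super a b : forall v u, length v = m -> length u = m ->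
  coeff_pow f a (vsub v u) * coeff_pow f b u <= coeff_pow f (a + b) v.
Proof.
  induction a as [|a IH]; intros v u Hv Hu.
  - simpl. destruct list_eq_dec as [E|E].
    + apply vsub_zero_eq in E; [subst; lra| lia].
    + rewrite Rmult_0_l; apply coeff_nonneg.
  - simpl. rewrite Rmult_comm, <- sum_scal.
    apply sum_le. intros [c e] Hin; simpl.
    rewrite <- vsub_comm.
    specialize (IH (vsub v e) u).
    assert (length (vsub v e) = m) by (rewrite vsub_length, (Hwf c e Hin); lia).
    specialize (IH H Hu).
    assert (0 <= c) by (eapply Hnn; eauto).
    pose proof (coeff_nonneg b u).
    nra.
Qed.

Definition T := fold_right Rplus 0 (map fst f).

Lemma T_nonneg : 0 <= T.
Proof.
  unfold T. apply Rle_trans with (fold_right Rplus 0 (map (fun _ : monomial => 0) f)).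
  + clear; induction f; simpl; lra.
  + apply sum_le. intros [c e] Hin; simpl. eapply Hnn; eauto.
Qed.

Lemma coeff_bound n v : coeff_pow f n v <= T ^ n.
Proof.
  revert v; induction n; intros v; simpl.
  - destruct list_eq_dec; lra.
  - unfold T at 1. rewrite Rmult_comm, <- sum_scal.
    apply sum_le. intros [c e] Hin; simpl.
    assert (0 <= c) by (eapply Hnn; eauto).
    specialize (IHn (vsub v e)). nra.
Qed.
End S.
Lemma ln_le' x y : 0 < x -> x <= y -> ln x <= ln y.
Proof. intros Hx [H|H]; [left; apply ln_increasing; auto| subst; lra]. Qed.

Lemma Un_cv_ev (u v : nat -> R) L N :
  (forall n, (N <= n)%nat -> u n = v n) -> Un_cv u L -> Un_cv v L.
Proof.
  intros He H eps Heps. destruct (H eps Heps) as [N1 HN1].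
  exists (Nat.max N N1). intros n Hn. rewrite <- He by lia. apply HN1; lia.
Qed.

Lemma finite_lb (g : nat -> R) K : exists M, forall s, (s < K)%nat -> M <= g s.
Proof.
  induction K as [|K [M HM]].
  - exists 0; intros; lia.
  - exists (Rmin M (g K)). intros s Hs.
    destruct (Nat.eq_dec s K); [subst; apply Rmin_r|].
    apply Rle_trans with M; [apply Rmin_l| apply HM; lia].
Qed.

Lemma fekete (a : nat -> R) (r N : nat) (T : R) :
 (0 < r)%nat -> (1 <= N)%nat -> 0 <= T ->
 (forall n, (N <= n)%nat -> 0 < a n) ->
 (forall n k, a n * a k <= a (n + k)%nat) ->
 (forall n, a n <= T ^ (r * n)%nat) ->
 exists L, Un_cv (fun n => nroot (r*n)%nat (a n)) L.
Proof.
  intros Hr HN HT Hpos Hsup Hbd.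
  set (l := fun n => ln (a n)).
  set (y := fun n => l n / INR (r * n)).
  assert (HTp : 0 < T).
  { destruct HT as [HT|HT]; auto. subst. specialize (Hbd N). specialize (Hpos N (le_n _)).
    rewrite pow_i in Hbd by lia. lra. }
  assert (HINR : forall n, (1 <= n)%nat -> 0 < INR (r * n)).
  { intros n Hn. apply lt_0_INR. lia. }
  assert (Hyb : forall n, (N <= n)%nat -> y n <= ln T).
  { intros n Hn. unfold y, l. specialize (HINR n ltac:(lia)).
    apply Rmult_le_reg_r with (INR (r*n)); auto.
    unfold Rdiv; rewrite Rmult_assoc, Rinv_l, Rmult_1_r by lra.
    rewrite Rmult_comm, <- ln_pow by auto. apply ln_le'; auto. }
  assert (Hlsup : forall n k, (N <= n)%nat -> (N <= k)%nat -> l n + l k <= l (n + k)%nat).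
  { intros n k Hn Hk. unfold l. rewrite <- ln_mult by auto. apply ln_le'; auto.
    apply Rmult_lt_0_compat; auto. }
  assert (Hiter : forall k q s, (N <= k)%nat -> (N <= s)%nat -> INR q * l k + l s <= l (q * k + s)%nat).
  { intros k q s Hk Hs. induction q.
    - simpl. lra.
    - rewrite S_INR. replace (S q * k + s)%nat with (k + (q * k + s))%nat by lia.
      eapply Rle_trans; [|apply Hlsup; lia]. lra. }
  set (E := fun x => exists n, (N <= n)%nat /\ x = y n).
  assert (HEb : bound E). { exists (ln T). intros x [n [Hn ->]]. auto. }
  assert (HEx : exists x, E x). { exists (y N). exists N; split; auto. }
  destruct (completeness E HEb HEx) as [L [HLub HLl]].
  assert (Hcv : Un_cv y L).
  { intros eps Heps.
    assert (Hk : exists k, (N <= k)%nat /\ L - eps / 2 < y k).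
    { apply Classical_Prop.NNPP. intro Hno.
      assert (L <= L - eps/2); [|lra].
      apply HLl. intros x [n [Hn ->]].
      apply Rnot_lt_le. intro Hc. apply Hno. exists n. auto. }
    destruct Hk as [k [Hk Hyk]].
    destruct (finite_lb l (N + k)) as [M HM].
    set (C := INR (N + k) * Rabs (y k) + Rabs M).
    assert (HC : 0 <= C).
    { unfold C. pose proof (pos_INR (N+k)). pose proof (Rabs_pos (y k)). pose proof (Rabs_pos M). nra. }
    destruct (archimed_cor1 (eps / (2 * (C + 1)))) as [N0 [HN0 HN0p]].
    { apply Rdiv_lt_0_compat; lra. }
    exists (Nat.max N N0). intros n Hn. unfold R_dist.
    assert (Hyn : y n <= L) by (apply HLub; exists n; split; auto; lia).
    assert (Hk0 : k <> 0%nat) by lia.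
    set (q := ((n - N) / k)%nat). set (s := (N + (n - N) mod k)%nat).
    assert (Hdec : n = (q * k + s)%nat).
    { unfold q, s. pose proof (Nat.div_mod (n - N) k Hk0). lia. }
    assert (Hs : (s < N + k)%nat) by (unfold s; pose proof (Nat.mod_upper_bound (n - N) k Hk0); lia).
    assert (Hln : INR q * l k + M <= l n).
    { rewrite Hdec. eapply Rle_trans; [|apply Hiter; unfold s; lia].
      pose proof (HM s Hs). lra. }
    assert (Hqk : INR n - INR (N + k) <= INR q * INR k <= INR n).
    { rewrite <- mult_INR. assert (INR n <= INR (q * k + (N + k))) by (apply le_INR; lia).
      rewrite plus_INR in H. assert (INR (q*k) <= INR n) by (apply le_INR; lia). lra. }
    assert (HR : 1 <= INR r) by (apply (le_INR 1); lia).
    assert (Hnp : 0 < INR n) by (apply lt_0_INR; lia).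
    assert (Hlk : l k = y k * (INR r * INR k)).
    { unfold y. rewrite mult_INR. field. split; apply not_0_INR; lia. }
    assert (Hlnn : l n = y n * (INR r * INR n)).
    { unfold y. rewrite mult_INR. field. split; apply not_0_INR; lia. }
    rewrite Hlk, Hlnn in Hln.
    assert (Hm1 : (y n - y k) * INR n * INR r >= - INR r * C).
    { unfold C.
      pose proof (Rabs_pos (y k)). pose proof (Rle_abs (y k)). pose proof (Rle_abs (- y k)).
      rewrite Rabs_Ropp in *. pose proof (Rle_abs (- M)). rewrite Rabs_Ropp in *.
      pose proof (Rabs_pos M).
      set (Q := INR q * INR k) in *.
      assert (Hd : (y n - y k) * INR n * INR r = (y n * (INR r * INR n) - INR q * (y k * (INR r * INR k))) + (Q - INR n) * INR r * y k) by (unfold Q; ring).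
      rewrite Hd.
      assert (G1 : (Q - INR n) * y k >= - (INR (N+k) * Rabs (y k))).
      { assert (0 <= INR n - Q) by lra. assert (INR n - Q <= INR (N + k)) by lra.
        assert ((INR n - Q) * y k <= (INR n - Q) * Rabs (y k)) by (apply Rmult_le_compat_l; lra).
        assert ((INR n - Q) * Rabs (y k) <= INR (N+k) * Rabs (y k)) by (apply Rmult_le_compat_r; lra).
        lra. }
      assert (G2 : (Q - INR n) * INR r * y k >= - INR r * (INR (N+k) * Rabs (y k))).
      { replace ((Q - INR n) * INR r * y k) with (INR r * ((Q - INR n) * y k)) by ring.
        assert (INR r * ((Q - INR n) * y k) >= INR r * - (INR (N+k) * Rabs (y k))).
        { apply Rle_ge, Rmult_le_compat_l; lra. }
        lra. }
      assert (- M <= INR r * Rabs M) by nra.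
      nra. }
    assert (Hm2 : (y n - y k) * INR n >= - C).
    { assert (((y n - y k) * INR n + C) * INR r >= 0) by lra.
      destruct (Rle_lt_dec 0 ((y n - y k) * INR n + C)) as [h|h]; [lra|].
      nra. }
    assert (HnN0 : / INR n <= / INR N0).
    { apply Rinv_le_contravar; [apply lt_0_INR; lia| apply le_INR; lia]. }
    assert (Hc1 : C * / INR n < eps / 2).
    { assert (C * / INR n <= (C+1) * / INR N0).
      { apply Rmult_le_compat; try lra. left; apply Rinv_0_lt_compat; lra. }
      assert ((C + 1) * / INR N0 < (C+1) * (eps / (2 * (C + 1)))) by (apply Rmult_lt_compat_l; lra).
      replace ((C+1) * (eps / (2 * (C + 1)))) with (eps / 2) in H0 by (field; lra).
      lra. }
    assert (Hm3 : y n - y k >= - C * / INR n).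
    { replace (y n - y k) with ((y n - y k) * INR n * / INR n) by (field; lra).
      apply Rle_ge. apply Rmult_le_compat_r; [left; apply Rinv_0_lt_compat; lra| lra]. }
    rewrite Rabs_left1 by lra. lra. }
  exists (exp L).
  apply Un_cv_ev with (fun n => exp (y n)) N.
  - intros n Hn. unfold nroot. destruct Rle_dec as [h|h].
    { specialize (Hpos n Hn). lra. }
    unfold Rpower, y, l. f_equal. unfold Rdiv. ring.
  - apply continuity_seq; auto. apply derivable_continuous, derivable_exp.
Qed.

Theorem mainTheorem1 (r m : nat) (f : laurent) (G : nat -> R) :
  (0 < r)%nat ->
  well_formed m f ->
  nonneg_coeffs f ->
  (forall n, G n = Const_pow m f n / INR (fact n)) ->
  (exists N, forall n, (N <= n)%nat -> Const_pow m f (r * n)%nat <> 0) ->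
  (forall n, 0 <= G n) /\
  exists L : R,
    Un_cv (fun n => nroot (r * n)%nat (INR (fact (r * n)%nat) * Rabs (G (r * n)%nat))) L /\
    Un_cv (fun n => nroot (r * n)%nat (Const_pow m f (r * n)%nat)) L.
Proof.
  intros Hr Hwf Hnn HG [N HN].
  assert (HGn : forall n, 0 <= G n).
  { intros n. rewrite HG. apply Rmult_le_pos; [apply coeff_nonneg; auto|].
    left; apply Rinv_0_lt_compat, lt_0_INR, lt_O_fact. }
  split; auto.
  destruct (fekete (fun n => Const_pow m f (r * n)%nat) r (S N) (T f) Hr ltac:(lia) (T_nonneg f Hnn))
    as [L HL].
  - intros n Hn. destruct (coeff_nonneg f Hnn (r*n) (repeat 0%Z m)) as [h|h]; auto.
    exfalso. apply (HN n); [lia| symmetry; exact h].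
  - intros n k. unfold Const_pow. rewrite Nat.mul_add_distr_l.
    rewrite <- (vsub_rep m) at 1. apply (coeff_super m f Hwf Hnn); apply repeat_length.
  - intros n. apply coeff_bound; auto.
  - exists L; split; auto.
    apply Un_cv_ev with (fun n => nroot (r * n)%nat (Const_pow m f (r * n)%nat)) 0%nat; auto.
    intros n _. f_equal. rewrite Rabs_right by (apply Rle_ge; auto). rewrite HG.
    field. apply not_0_INR, fact_neq_0.
Qed.
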